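(* The cut rule — from $\Delta' \vdash A$ and $\Delta(A) \vdash B$ infer $\Delta(\Delta') \vdash B$, for an arbitrary bunched context $\Delta(-)$ — is admissible in the cut-free fragment $\vdash_{\mathsf{cf}}$ of BI+$L$. That is, if $\Delta' \vdash_{\mathsf{cf}} A$ and $\Delta(A) \vdash_{\mathsf{cf}} B$ are derivable in BI+$L$ without cut, then $\Delta(\Delta') \vdash_{\mathsf{cf}} B$ is derivable in BI+$L$ without cut.
   Context: BI is the logic of bunched implications, with formulas built from atoms, $\top,\bot,\wedge,\vee,\to$ and the multiplicatives $\mathsf{emp}$, $\ast$ (separating conjunction), $-\!\ast$ (magic wand). Its sequent calculus operates on sequents $\Delta \vdash \varphi$ where $\Delta$ is a bunch: a tree whose binary nodes are labelled with ''$,$'' (multiplicative, corresponding to $\ast$) or ''$;$'' (additive, corresponding to $\wedge$) and whose leaves are formulas or the empty bunches $\varnothing_m$, $\varnothing_a$, taken modulo commutative monoid laws for $('','',\varnothing_m)$ and $('';'',\varnothing_a)$. A bunched context $\Delta(-)$ is a bunch with a hole. The calculus has the axiom $a \vdash a$ for atoms, weakening and contraction for ''$;$'' inside arbitrary bunched contexts, the usual left/right rules for all connectives (left rules applying deep inside bunched contexts), and the cut rule. A bunched term is a bunch built from ''$,$'', ''$;$'' and variables $x_1,\dots,x_n$; it is linear if each variable occurs at most once; $T[\Delta_1,\dots,\Delta_n]$ denotes substitution of $\Delta_j$ for $x_j$. A simple structural rule is a tuple $(\{T_1,\dots,T_m\},T)$ with $T$ linear, representing the rule: from $\Pi(T_i[\vec\Delta])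 \vdash \varphi$ for all $1\le i\le m$, infer $\Pi(T[\vec\Delta]) \vdash \varphi$, for any bunched context $\Pi$ and bunches $\vec\Delta$ (e.g. weakening for ''$,$'' is $(\{x_1\}, x_1 , x_2)$). Fix a finite collection $L$ of simple structural rules; BI+$L$ is the BI sequent calculus extended with the rules in $L$, and $\vdash_{\mathsf{cf}}$ denotes provability in BI+$L$ without the cut rule. *)

(* Defs.v *)
From Stdlib Require Import List.
Import ListNotations.

Inductive formula : Type :=
| FAtom : nat -> formula
| FTop : formula
| FBot : formula
| FAnd : formula -> formula -> formula
| FOr : formula -> formula -> formula
| FImp : formula -> formula -> formula
| FEmp : formula
| FStar : formula -> formula -> formula
| FWand : formula -> formula -> formula.

(* Bunches: trees with "," (BComma) and ";" (BSemi) nodes, leaves formulas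
   or the empty bunches (BEmpM = multiplicative unit, BEmpA = additive unit). *)
Inductive bunch : Type :=
| BForm : formula -> bunch
| BEmpM : bunch
| BEmpA : bunch
| BComma : bunch -> bunch -> bunch
| BSemi : bunch -> bunch -> bunch.

Inductive bequiv : bunch -> bunch -> Prop :=
| beq_refl G : bequiv G G
| beq_sym G H : bequiv G H -> bequiv H G
| beq_trans G H K : bequiv G H -> bequiv H K -> bequiv G K
| beq_comma_assoc G H K : bequiv (BComma G (BComma H K)) (BComma (BComma G H) K)
| beq_comma_comm G H : bequiv (BComma G H) (BComma H G)
| beq_comma_unit G : bequiv (BComma G BEmpM) G
| beq_semi_assoc G H K : bequiv (BSemi G (BSemi H K)) (BSemi (BSemi G H) K)
| beq_semi_comm G H : bequiv (BSemi G H) (BSemi H G)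
| beq_semi_unit G : bequiv (BSemi G BEmpA) G
| beq_comma_cong G G' H H' : bequiv G G' -> bequiv H H' -> bequiv (BComma G H) (BComma G' H')
| beq_semi_cong G G' H H' : bequiv G G' -> bequiv H H' -> bequiv (BSemi G H) (BSemi G' H').

Inductive bctx : Type :=
| CHole : bctx
| CCommaL : bctx -> bunch -> bctx
| CCommaR : bunch -> bctx -> bctx
| CSemiL : bctx -> bunch -> bctx
| CSemiR : bunch -> bctx -> bctx.

Fixpoint fill (C : bctx) (D : bunch) : bunch :=
  match C with
  | CHole => D
  | CCommaL C' B => BComma (fill C' D) B
  | CCommaR B C' => BComma B (fill C' D)
  | CSemiL C' B => BSemi (fill C' D) B
  | CSemiR B C' => BSemi B (fill C' D)
  end.

Inductive bterm : Type :=
| TVar : nat -> bterm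
| TComma : bterm -> bterm -> bterm
| TSemi : bterm -> bterm -> bterm.

Fixpoint tvars (T : bterm) : list nat :=
  match T with
  | TVar j => [j]
  | TComma T1 T2 => tvars T1 ++ tvars T2
  | TSemi T1 T2 => tvars T1 ++ tvars T2
  end.

Definition linear (T : bterm) : Prop := NoDup (tvars T).

(* T[D_1, ..., D_n], with the substituted bunches given as a function of the index *)
Fixpoint tsubst (T : bterm) (D : nat -> bunch) : bunch :=
  match T with
  | TVar j => D j
  | TComma T1 T2 => BComma (tsubst T1 D) (tsubst T2 D)
  | TSemi T1 T2 => BSemi (tsubst T1 D) (tsubst T2 D)
  end.

(* A simple structural rule ({T_1,...,T_m}, T): premise terms and conclusion term. *)
Definition srule : Type := (list bterm * bterm)%type.

Definition simple_rule (r : srule) : Prop := linear (snd r).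

(* Derivability in BI + L.  The flag [withcut] says whether the cut rule may
   be used; [derivable false L] is the cut-free relation |-_cf. *)
Inductive derivable (withcut : bool) (L : list srule) : bunch -> formula -> Prop :=
| d_equiv G G' A : bequiv G G' -> derivable withcut L G A -> derivable withcut L G' A
| d_ax a : derivable withcut L (BForm (FAtom a)) (FAtom a)
| d_weak C D D' A : derivable withcut L (fill C D) A ->
    derivable withcut L (fill C (BSemi D D')) A
| d_contr C D A : derivable withcut L (fill C (BSemi D D)) A ->
    derivable withcut L (fill C D) A
| d_topR : derivable withcut L BEmpA FTop
| d_topL C A : derivable withcut L (fill C BEmpA) A ->
    derivable withcut L (fill C (BForm FTop)) A
| d_botL C A : derivable withcut L (fill C (BForm FBot)) A
| d_andR G H A B : derivable withcut L G A -> derivable withcut L H B ->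
    derivable withcut L (BSemi G H) (FAnd A B)
| d_andL C A B E : derivable withcut L (fill C (BSemi (BForm A) (BForm B))) E ->
    derivable withcut L (fill C (BForm (FAnd A B))) E
| d_orR1 G A B : derivable withcut L G A -> derivable withcut L G (FOr A B)
| d_orR2 G A B : derivable withcut L G B -> derivable withcut L G (FOr A B)
| d_orL C A B E : derivable withcut L (fill C (BForm A)) E ->
    derivable withcut L (fill C (BForm B)) E ->
    derivable withcut L (fill C (BForm (FOr A B))) E
| d_impR G A B : derivable withcut L (BSemi G (BForm A)) B ->
    derivable withcut L G (FImp A B)
| d_impL C D A B E : derivable withcut L D A ->
    derivable withcut L (fill C (BForm B)) E ->
    derivable withcut L (fill C (BSemi D (BForm (FImp A B)))) E
| d_empR : derivable withcut L BEmpM FEmp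
| d_empL C A : derivable withcut L (fill C BEmpM) A ->
    derivable withcut L (fill C (BForm FEmp)) A
| d_starR G H A B : derivable withcut L G A -> derivable withcut L H B ->
    derivable withcut L (BComma G H) (FStar A B)
| d_starL C A B E : derivable withcut L (fill C (BComma (BForm A) (BForm B))) E ->
    derivable withcut L (fill C (BForm (FStar A B))) E
| d_wandR G A B : derivable withcut L (BComma G (BForm A)) B ->
    derivable withcut L G (FWand A B)
| d_wandL C D A B E : derivable withcut L D A ->
    derivable withcut L (fill C (BForm B)) E ->
    derivable withcut L (fill C (BComma D (BForm (FWand A B)))) E
| d_struct (r : srule) C (D : nat -> bunch) A : In r L ->
    (forall Ti, In Ti (fst r) -> derivable withcut L (fill C (tsubst Ti D)) A) ->
    derivable withcut L (fill C (tsubst (snd r) D)) A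
| d_cut C D' A B : withcut = true ->
    derivable withcut L D' A -> derivable withcut L (fill C (BForm A)) B ->
    derivable withcut L (fill C D') B.

Definition cf (L : list srule) (G : bunch) (A : formula) : Prop := derivable false L G A.

(* Main.v *)
Require Import Defs.
From Stdlib Require Import List PeanoNat.
Import ListNotations.

Inductive mctx : Type :=
| MHole | MForm (f : formula) | MEmpM | MEmpA
| MComma (m1 m2 : mctx) | MSemi (m1 m2 : mctx).

Fixpoint fill_m (M : mctx) (X : bunch) : bunch :=
  match M with
  | MHole => X | MForm f => BForm f | MEmpM => BEmpM | MEmpA => BEmpA
  | MComma a b => BComma (fill_m a X) (fill_m b X)
  | MSemi a b => BSemi (fill_m a X) (fill_m b X)
  end.

Fixpoint embed (b : bunch) : mctx :=
  match b with
  | BForm f => MForm f | BEmpM => MEmpM | BEmpA => MEmpA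
  | BComma x y => MComma (embed x) (embed y)
  | BSemi x y => MSemi (embed x) (embed y)
  end.

Lemma fill_embed b X : fill_m (embed b) X = b.
Proof. induction b; simpl; congruence. Qed.

Inductive mcc : Type :=
| KHole | KCommaL (K : mcc) (M : mctx) | KCommaR (M : mctx) (K : mcc)
| KSemiL (K : mcc) (M : mctx) | KSemiR (M : mctx) (K : mcc).

Fixpoint mfillc (K : mcc) (M : mctx) : mctx :=
  match K with
  | KHole => M
  | KCommaL K' N => MComma (mfillc K' M) N
  | KCommaR N K' => MComma N (mfillc K' M)
  | KSemiL K' N => MSemi (mfillc K' M) N
  | KSemiR N K' => MSemi N (mfillc K' M)
  end.

Fixpoint cfill (K : mcc) (X : bunch) : bctx :=
  match K with
  | KHole => CHole
  | KCommaL K' N => CCommaL (cfill K' X) (fill_m N X)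
  | KCommaR N K' => CCommaR (fill_m N X) (cfill K' X)
  | KSemiL K' N => CSemiL (cfill K' X) (fill_m N X)
  | KSemiR N K' => CSemiR (fill_m N X) (cfill K' X)
  end.

Lemma fill_mfillc K M X : fill_m (mfillc K M) X = fill (cfill K X) (fill_m M X).
Proof. induction K; simpl; congruence. Qed.

Fixpoint ctx2K (C : bctx) : mcc :=
  match C with
  | CHole => KHole
  | CCommaL C' B => KCommaL (ctx2K C') (embed B)
  | CCommaR B C' => KCommaR (embed B) (ctx2K C')
  | CSemiL C' B => KSemiL (ctx2K C') (embed B)
  | CSemiR B C' => KSemiR (embed B) (ctx2K C')
  end.

Lemma cfill_ctx2K C X : cfill (ctx2K C) X = C.
Proof. induction C; simpl; rewrite ?fill_embed; congruence. Qed.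

Fixpoint comp (C1 C2 : bctx) : bctx :=
  match C1 with
  | CHole => C2
  | CCommaL C B => CCommaL (comp C C2) B
  | CCommaR B C => CCommaR B (comp C C2)
  | CSemiL C B => CSemiL (comp C C2) B
  | CSemiR B C => CSemiR B (comp C C2)
  end.

Lemma fill_comp C1 C2 X : fill (comp C1 C2) X = fill C1 (fill C2 X).
Proof. induction C1; simpl; congruence. Qed.

Lemma bequiv_fill C X Y : bequiv X Y -> bequiv (fill C X) (fill C Y).
Proof.
  induction C; simpl; intros; auto.
  all: first [apply beq_comma_cong | apply beq_semi_cong]; auto using beq_refl.
Qed.

Lemma decomp A C Z M : fill_m M (BForm A) = fill C Z ->
  exists K Mz, M = mfillc K Mz /\ Z = fill_m Mz (BForm A) /\ C = cfill K (BForm A).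
Proof.
  revert M; induction C; intros M H; simpl in H.
  - exists KHole, M; simpl; auto.
  - destruct M; simpl in H; try discriminate H; injection H as H1 H2.
    destruct (IHC _ H1) as (K & Mz & E1 & E2 & E3).
    exists (KCommaL K M2), Mz; simpl; repeat split; congruence.
  - destruct M; simpl in H; try discriminate H; injection H as H1 H2.
    destruct (IHC _ H2) as (K & Mz & E1 & E2 & E3).
    exists (KCommaR M1 K), Mz; simpl; repeat split; congruence.
  - destruct M; simpl in H; try discriminate H; injection H as H1 H2.
    destruct (IHC _ H1) as (K & Mz & E1 & E2 & E3).
    exists (KSemiL K M2), Mz; simpl; repeat split; congruence.
  - destruct M; simpl in H; try discriminate H; injection H as H1 H2.
    destruct (IHC _ H2) as (K & Mz & E1 & E2 & E3).
    exists (KSemiR M1 K), Mz; simpl; repeat split; congruence.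
Qed.

Fixpoint mtsubst (T : bterm) (Ms : nat -> mctx) : mctx :=
  match T with
  | TVar j => Ms j
  | TComma a b => MComma (mtsubst a Ms) (mtsubst b Ms)
  | TSemi a b => MSemi (mtsubst a Ms) (mtsubst b Ms)
  end.

Lemma fill_mtsubst T Ms X : fill_m (mtsubst T Ms) X = tsubst T (fun j => fill_m (Ms j) X).
Proof. induction T; simpl; congruence. Qed.

Lemma mtsubst_ext T f g : (forall j, In j (tvars T) -> f j = g j) -> mtsubst T f = mtsubst T g.
Proof.
  induction T; simpl; intros H.
  - apply H; auto.
  - rewrite IHT1, IHT2; auto; intros; apply H; apply in_or_app; auto.
  - rewrite IHT1, IHT2; auto; intros; apply H; apply in_or_app; auto.
Qed.

Lemma tsubst_ext T f g : (forall j, f j = g j) -> tsubst T f = tsubst T g.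
Proof. induction T; simpl; intros H; [apply H | rewrite IHT1, IHT2 by auto; reflexivity | rewrite IHT1, IHT2 by auto; reflexivity]. Qed.

Lemma nodup_disj (l1 l2 : list nat) x : NoDup (l1 ++ l2) -> In x l1 -> In x l2 -> False.
Proof.
  induction l1; simpl; intros ND H1 H2; [easy|].
  inversion ND; subst. destruct H1 as [->|H1].
  - apply H3. apply in_or_app; auto.
  - eauto.
Qed.

Lemma tsubst_decomp A T : forall Dx M, NoDup (tvars T) -> tsubst T Dx = fill_m M (BForm A) ->
  exists Ms, M = mtsubst T Ms /\ forall j, Dx j = fill_m (Ms j) (BForm A).
Proof.
  induction T as [j|T1 IH1 T2 IH2|T1 IH1 T2 IH2]; intros Dx M ND H; simpl in *.
  - exists (fun k => if Nat.eq_dec k j then M else embed (Dx k)). split.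
    + destruct (Nat.eq_dec j j); congruence.
    + intros k. destruct (Nat.eq_dec k j) as [->|n]; [auto | now rewrite fill_embed].
  - destruct M; simpl in H; try discriminate H. injection H as H1 H2.
    destruct (IH1 Dx M1 (NoDup_app_remove_r _ _ ND) H1) as (Ms1 & E1 & F1).
    destruct (IH2 Dx M2 (NoDup_app_remove_l _ _ ND) H2) as (Ms2 & E2 & F2).
    exists (fun k => if in_dec Nat.eq_dec k (tvars T1) then Ms1 k else Ms2 k). split.
    + simpl. f_equal.
      * rewrite E1. apply mtsubst_ext. intros k Hk. destruct (in_dec Nat.eq_dec k (tvars T1)); tauto.
      * rewrite E2. apply mtsubst_ext. intros k Hk.
        destruct (in_dec Nat.eq_dec k (tvars T1)) as [Hin|]; auto.
        exfalso; eapply nodup_disj; eauto.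
    + intros k. destruct (in_dec Nat.eq_dec k (tvars T1)); auto.
  - destruct M; simpl in H; try discriminate H. injection H as H1 H2.
    destruct (IH1 Dx M1 (NoDup_app_remove_r _ _ ND) H1) as (Ms1 & E1 & F1).
    destruct (IH2 Dx M2 (NoDup_app_remove_l _ _ ND) H2) as (Ms2 & E2 & F2).
    exists (fun k => if in_dec Nat.eq_dec k (tvars T1) then Ms1 k else Ms2 k). split.
    + simpl. f_equal.
      * rewrite E1. apply mtsubst_ext. intros k Hk. destruct (in_dec Nat.eq_dec k (tvars T1)); tauto.
      * rewrite E2. apply mtsubst_ext. intros k Hk.
        destruct (in_dec Nat.eq_dec k (tvars T1)) as [Hin|]; auto.
        exfalso; eapply nodup_disj; eauto.
    + intros k. destruct (in_dec Nat.eq_dec k (tvars T1)); auto.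
Qed.

Ltac invM := repeat match goal with
 | H : BComma _ _ = fill_m ?M _ |- _ => destruct M; simpl in H; try discriminate H; injection H as ? ?
 | H : BSemi _ _ = fill_m ?M _ |- _ => destruct M; simpl in H; try discriminate H; injection H as ? ?
 | H : BEmpM = fill_m ?M _ |- _ => destruct M; simpl in H; try discriminate H; clear H
 | H : BEmpA = fill_m ?M _ |- _ => destruct M; simpl in H; try discriminate H; clear H
 end; subst.

Lemma track A G H : bequiv G H ->
  (forall M, G = fill_m M (BForm A) -> exists M', H = fill_m M' (BForm A) /\ forall X, bequiv (fill_m M X) (fill_m M' X)) /\
  (forall M, H = fill_m M (BForm A) -> exists M', G = fill_m M' (BForm A) /\ forall X, bequiv (fill_m M X) (fill_m M' X)).
Proof.
  induction 1 as [G | G H h [IH1 IH2] | G H K h1 [IH1 IH2] h2 [IH3 IH4] | G H K | G H | G | G H K | G H | G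
    | G G' H H' h1 [IH1 IH2] h2 [IH3 IH4] | G G' H H' h1 [IH1 IH2] h2 [IH3 IH4]]; split; intros M HM.
  - exists M; split; [exact HM | intros; apply beq_refl].
  - exists M; split; [exact HM | intros; apply beq_refl].
  - exact (IH2 M HM).
  - exact (IH1 M HM).
  - destruct (IH1 M HM) as (M1 & E1 & X1). destruct (IH3 M1 E1) as (M2 & E2 & X2).
    exists M2; split; [exact E2 | intros X; eapply beq_trans; eauto].
  - destruct (IH4 M HM) as (M1 & E1 & X1). destruct (IH2 M1 E1) as (M2 & E2 & X2).
    exists M2; split; [exact E2 | intros X; eapply beq_trans; eauto].
  - invM. eexists (MComma (MComma _ _) _); split; [reflexivity | intros; simpl; apply beq_comma_assoc].
  - invM. eexists (MComma _ (MComma _ _)); split; [reflexivity | intros; simpl; apply beq_sym, beq_comma_assoc].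
  - invM. eexists (MComma _ _); split; [reflexivity | intros; simpl; apply beq_comma_comm].
  - invM. eexists (MComma _ _); split; [reflexivity | intros; simpl; apply beq_comma_comm].
  - invM. eexists; split; [reflexivity | intros; simpl; apply beq_comma_unit].
  - subst. exists (MComma M MEmpM); split; [reflexivity | intros; simpl; apply beq_sym, beq_comma_unit].
  - invM. eexists (MSemi (MSemi _ _) _); split; [reflexivity | intros; simpl; apply beq_semi_assoc].
  - invM. eexists (MSemi _ (MSemi _ _)); split; [reflexivity | intros; simpl; apply beq_sym, beq_semi_assoc].
  - invM. eexists (MSemi _ _); split; [reflexivity | intros; simpl; apply beq_semi_comm].
  - invM. eexists (MSemi _ _); split; [reflexivity | intros; simpl; apply beq_semi_comm].
  - invM. eexists; split; [reflexivity | intros; simpl; apply beq_semi_unit].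
  - subst. exists (MSemi M MEmpA); split; [reflexivity | intros; simpl; apply beq_sym, beq_semi_unit].
  - destruct M as [| | | |M1 M2|M1 M2]; simpl in HM; try discriminate HM; injection HM as HM1 HM2.
    destruct (IH1 M1 HM1) as (N1 & F1 & X1). destruct (IH3 M2 HM2) as (N2 & F2 & X2).
    exists (MComma N1 N2); split; [simpl; congruence | intros; simpl; apply beq_comma_cong; auto].
  - destruct M as [| | | |M1 M2|M1 M2]; simpl in HM; try discriminate HM; injection HM as HM1 HM2.
    destruct (IH2 M1 HM1) as (N1 & F1 & X1). destruct (IH4 M2 HM2) as (N2 & F2 & X2).
    exists (MComma N1 N2); split; [simpl; congruence | intros; simpl; apply beq_comma_cong; auto].
  - destruct M as [| | | |M1 M2|M1 M2]; simpl in HM; try discriminate HM; injection HM as HM1 HM2.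
    destruct (IH1 M1 HM1) as (N1 & F1 & X1). destruct (IH3 M2 HM2) as (N2 & F2 & X2).
    exists (MSemi N1 N2); split; [simpl; congruence | intros; simpl; apply beq_semi_cong; auto].
  - destruct M as [| | | |M1 M2|M1 M2]; simpl in HM; try discriminate HM; injection HM as HM1 HM2.
    destruct (IH2 M1 HM1) as (N1 & F1 & X1). destruct (IH4 M2 HM2) as (N2 & F2 & X2).
    exists (MSemi N1 N2); split; [simpl; congruence | intros; simpl; apply beq_semi_cong; auto].
Qed.

Definition Scut L A := forall C D' B, cf L D' A -> cf L (fill C (BForm A)) B -> cf L (fill C D') B.

Definition Prin L (D' : bunch) (A : formula) : Prop :=
  match A with
  | FAtom _ => True
  | FTop => D' = BEmpA
  | FBot => False
  | FAnd X Y => exists G H, D' = BSemi G H /\ cf L G X /\ cf L H Y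
  | FOr X Y => cf L D' X \/ cf L D' Y
  | FImp X Y => cf L (BSemi D' (BForm X)) Y
  | FEmp => D' = BEmpM
  | FStar X Y => exists G H, D' = BComma G H /\ cf L G X /\ cf L H Y
  | FWand X Y => cf L (BComma D' (BForm X)) Y
  end.

Definition Sub L A : Prop :=
  match A with
  | FAnd X Y | FOr X Y | FImp X Y | FStar X Y | FWand X Y => Scut L X /\ Scut L Y
  | _ => True
  end.

Ltac dec HM K Mz EZ :=
  let E1 := fresh "E1" in let E3 := fresh "E3" in
  destruct (decomp _ _ _ _ (eq_sym HM)) as (K & Mz & E1 & EZ & E3); subst.

Ltac useIH IH Mn := specialize (IH Mn); rewrite ?fill_mfillc in IH; simpl in IH; specialize (IH eq_refl).

Lemma elemma L (HL : forall r, In r L -> simple_rule r) A Dc :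
  Sub L A -> Prin L Dc A -> cf L Dc A ->
  forall G B, derivable false L G B -> forall M, G = fill_m M (BForm A) -> cf L (fill_m M Dc) B.
Proof.
  unfold cf. intros HS HP HD G B E.
  induction E as [G G' A0 Heq E IH | a | C D D2 A0 E IH | C D A0 E IH | | C A0 E IH | C A0
    | G1 G2 X Y D1 IH1 D2 IH2 | C X Y A0 E IH | G X Y E IH | G X Y E IH
    | C X Y A0 D1 IH1 D2 IH2 | G X Y E IH | C D X Y A0 D1 IH1 D2 IH2
    | | C A0 E IH | G1 G2 X Y D1 IH1 D2 IH2 | C X Y A0 E IH | G X Y E IH
    | C D X Y A0 D1 IH1 D2 IH2 | r C Dx A0 Hr Hprem IH | C D X Y Hc D1 IH1 D2 IH2];
    intros M HM.
  -
    destruct (proj2 (track A _ _ Heq) M HM) as (M' & HG & HX).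
    apply d_equiv with (fill_m M' Dc); [apply beq_sym, HX | apply IH, HG].
  -
    destruct M; simpl in HM; try discriminate HM; injection HM as HM; subst; simpl;
      [exact HD | apply d_ax].
  -
    dec HM K Mz EZ. destruct Mz; simpl in EZ; try discriminate EZ. injection EZ as -> ->.
    rewrite fill_mfillc; simpl. apply d_weak. useIH IH (mfillc K Mz1). exact IH.
  -
    dec HM K Mz EZ. rewrite fill_mfillc. apply d_contr. useIH IH (mfillc K (MSemi Mz Mz)). exact IH.
  -
    destruct M; simpl in HM; try discriminate HM. simpl. apply d_topR.
  -
    dec HM K Mz EZ. destruct Mz; simpl in EZ; try discriminate EZ; injection EZ as EZ; subst.
    + simpl in HP; subst Dc. rewrite fill_mfillc; simpl. useIH IH (mfillc K MEmpA). exact IH.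
    + rewrite fill_mfillc; simpl. apply d_topL. useIH IH (mfillc K MEmpA). exact IH.
  -
    dec HM K Mz EZ. destruct Mz; simpl in EZ; try discriminate EZ; injection EZ as EZ; subst.
    + destruct HP.
    + rewrite fill_mfillc; simpl. apply d_botL.
  -
    destruct M; simpl in HM; try discriminate HM; injection HM as -> ->.
    simpl. apply d_andR; [apply IH1 | apply IH2]; reflexivity.
  -
    dec HM K Mz EZ. destruct Mz; simpl in EZ; try discriminate EZ; injection EZ as EZ; subst.
    + simpl in HP, HS. destruct HP as (G1 & G2 & HDc & HG1 & HG2). destruct HS as [SX SY].
      rewrite fill_mfillc; simpl. useIH IH (mfillc K (MSemi (MForm X) (MForm Y))).
      remember (cfill K Dc) as K0. rewrite HDc.
      assert (H1 : derivable false L (fill K0 (BSemi G1 (BForm Y))) A0).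
      { change (BSemi G1 (BForm Y)) with (fill (CSemiL CHole (BForm Y)) G1).
        rewrite <- fill_comp. apply SX; [exact HG1|]. rewrite fill_comp. exact IH. }
      change (BSemi G1 G2) with (fill (CSemiR G1 CHole) G2).
      rewrite <- fill_comp. apply SY; [exact HG2|]. rewrite fill_comp. exact H1.
    + rewrite fill_mfillc; simpl. apply d_andL. useIH IH (mfillc K (MSemi (MForm X) (MForm Y))). exact IH.
  - apply d_orR1; apply IH; exact HM.
  - apply d_orR2; apply IH; exact HM.
  -
    dec HM K Mz EZ. destruct Mz; simpl in EZ; try discriminate EZ; injection EZ as EZ; subst.
    + simpl in HP, HS. destruct HS as [SX SY]. rewrite fill_mfillc; simpl.
      useIH IH1 (mfillc K (MForm X)). useIH IH2 (mfillc K (MForm Y)).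
      destruct HP as [HX|HY]; [exact (SX _ _ _ HX IH1) | exact (SY _ _ _ HY IH2)].
    + rewrite fill_mfillc; simpl. apply d_orL;
        [useIH IH1 (mfillc K (MForm X)) | useIH IH2 (mfillc K (MForm Y))]; assumption.
  -
    subst G. apply d_impR. exact (IH (MSemi M (MForm X)) eq_refl).
  -
    dec HM K Mz EZ. destruct Mz; simpl in EZ; try discriminate EZ. injection EZ as EZa EZb.
    subst D. destruct Mz2; simpl in EZb; try discriminate EZb; injection EZb as EZb; subst.
    + simpl in HP, HS. destruct HS as [SX SY]. rewrite fill_mfillc; simpl.
      specialize (IH1 Mz1 eq_refl). useIH IH2 (mfillc K (MForm Y)).
      assert (H1 : derivable false L (fill (CSemiR Dc CHole) (fill_m Mz1 Dc)) Y)
        by (apply SX; [exact IH1 | exact HP]).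
      simpl in H1. assert (H2 := SY _ _ _ H1 IH2).
      eapply d_equiv; [apply bequiv_fill, beq_semi_comm | exact H2].
    + rewrite fill_mfillc; simpl. apply d_impL; [apply (IH1 Mz1 eq_refl) |].
      useIH IH2 (mfillc K (MForm Y)); exact IH2.
  -
    destruct M; simpl in HM; try discriminate HM. simpl. apply d_empR.
  -
    dec HM K Mz EZ. destruct Mz; simpl in EZ; try discriminate EZ; injection EZ as EZ; subst.
    + simpl in HP; subst Dc. rewrite fill_mfillc; simpl. useIH IH (mfillc K MEmpM). exact IH.
    + rewrite fill_mfillc; simpl. apply d_empL. useIH IH (mfillc K MEmpM). exact IH.
  -
    destruct M; simpl in HM; try discriminate HM; injection HM as -> ->.
    simpl. apply d_starR; [apply IH1 | apply IH2]; reflexivity.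
  -
    dec HM K Mz EZ. destruct Mz; simpl in EZ; try discriminate EZ; injection EZ as EZ; subst.
    + simpl in HP, HS. destruct HP as (G1 & G2 & HDc & HG1 & HG2). destruct HS as [SX SY].
      rewrite fill_mfillc; simpl. useIH IH (mfillc K (MComma (MForm X) (MForm Y))).
      remember (cfill K Dc) as K0. rewrite HDc.
      assert (H1 : derivable false L (fill K0 (BComma G1 (BForm Y))) A0).
      { change (BComma G1 (BForm Y)) with (fill (CCommaL CHole (BForm Y)) G1).
        rewrite <- fill_comp. apply SX; [exact HG1|]. rewrite fill_comp. exact IH. }
      change (BComma G1 G2) with (fill (CCommaR G1 CHole) G2).
      rewrite <- fill_comp. apply SY; [exact HG2|]. rewrite fill_comp. exact H1.
    + rewrite fill_mfillc; simpl. apply d_starL. useIH IH (mfillc K (MComma (MForm X) (MForm Y))). exact IH.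
  -
    subst G. apply d_wandR. exact (IH (MComma M (MForm X)) eq_refl).
  -
    dec HM K Mz EZ. destruct Mz; simpl in EZ; try discriminate EZ. injection EZ as EZa EZb.
    subst D. destruct Mz2; simpl in EZb; try discriminate EZb; injection EZb as EZb; subst.
    + simpl in HP, HS. destruct HS as [SX SY]. rewrite fill_mfillc; simpl.
      specialize (IH1 Mz1 eq_refl). useIH IH2 (mfillc K (MForm Y)).
      assert (H1 : derivable false L (fill (CCommaR Dc CHole) (fill_m Mz1 Dc)) Y)
        by (apply SX; [exact IH1 | exact HP]).
      simpl in H1. assert (H2 := SY _ _ _ H1 IH2).
      eapply d_equiv; [apply bequiv_fill, beq_comma_comm | exact H2].
    + rewrite fill_mfillc; simpl. apply d_wandL; [apply (IH1 Mz1 eq_refl) |].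
      useIH IH2 (mfillc K (MForm Y)); exact IH2.
  -
    dec HM K Mz EZ.
    destruct (tsubst_decomp _ _ _ _ (HL r Hr) EZ) as (Ms & HMz & HDx). subst Mz.
    rewrite fill_mfillc, fill_mtsubst. apply d_struct; [exact Hr|].
    intros Ti HTi. specialize (IH Ti HTi (mfillc K (mtsubst Ti Ms))).
    rewrite !fill_mfillc, !fill_mtsubst in IH. apply IH. f_equal.
    apply tsubst_ext. intro j. apply HDx.
  - discriminate Hc.
Qed.

Lemma elemma1 L (HL : forall r, In r L -> simple_rule r) A Dc C B :
  Sub L A -> Prin L Dc A -> cf L Dc A -> cf L (fill C (BForm A)) B -> cf L (fill C Dc) B.
Proof.
  intros HS HP HD HE.
  pose proof (elemma L HL A Dc HS HP HD _ _ HE (mfillc (ctx2K C) MHole)) as H.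
  rewrite !fill_mfillc, !cfill_ctx2K in H. simpl in H. apply H. reflexivity.
Qed.

Lemma cut_main L (HL : forall r, In r L -> simple_rule r) :
  forall Dc A, cf L Dc A -> Sub L A -> forall C B, cf L (fill C (BForm A)) B -> cf L (fill C Dc) B.
Proof.
  intros Dc A HD. unfold cf in *.
  induction HD as [G G' A0 Heq E IH | a | C D D2 A0 E IH | C D A0 E IH | | C A0 E IH | C A0
    | G1 G2 X Y D1 IH1 D2 IH2 | C X Y A0 E IH | G X Y E IH | G X Y E IH
    | C X Y A0 D1 IH1 D2 IH2 | G X Y E IH | C D X Y A0 D1 IH1 D2 IH2
    | | C A0 E IH | G1 G2 X Y D1 IH1 D2 IH2 | C X Y A0 E IH | G X Y E IH
    | C D X Y A0 D1 IH1 D2 IH2 | r C Dx A0 Hr Hprem IH | C D X Y Hc D1 IH1 D2 IH2];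
    intros HS C0 B0 HE.
  - apply d_equiv with (fill C0 G); [apply bequiv_fill; exact Heq | apply IH; auto].
  - exact HE.
  - rewrite <- fill_comp; apply d_weak; rewrite fill_comp; apply IH; auto.
  - rewrite <- fill_comp; apply d_contr; rewrite fill_comp; apply IH; auto.
  - apply (elemma1 L HL _ _ _ _ HS); [reflexivity | apply d_topR | exact HE].
  - rewrite <- fill_comp; apply d_topL; rewrite fill_comp; apply IH; auto.
  - rewrite <- fill_comp; apply d_botL.
  - apply (elemma1 L HL _ _ _ _ HS); [exists G1, G2; repeat split; assumption
      | apply d_andR; assumption | exact HE].
  - rewrite <- fill_comp; apply d_andL; rewrite fill_comp; apply IH; auto.
  - apply (elemma1 L HL _ _ _ _ HS); [left; assumption | apply d_orR1; assumption | exact HE].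
  - apply (elemma1 L HL _ _ _ _ HS); [right; assumption | apply d_orR2; assumption | exact HE].
  - rewrite <- fill_comp; apply d_orL; rewrite fill_comp; [apply IH1 | apply IH2]; auto.
  - apply (elemma1 L HL _ _ _ _ HS); [assumption | apply d_impR; assumption | exact HE].
  - rewrite <- fill_comp; apply d_impL; [exact D1 | rewrite fill_comp; apply IH2; auto].
  - apply (elemma1 L HL _ _ _ _ HS); [reflexivity | apply d_empR | exact HE].
  - rewrite <- fill_comp; apply d_empL; rewrite fill_comp; apply IH; auto.
  - apply (elemma1 L HL _ _ _ _ HS); [exists G1, G2; repeat split; assumption
      | apply d_starR; assumption | exact HE].
  - rewrite <- fill_comp; apply d_starL; rewrite fill_comp; apply IH; auto.
  - apply (elemma1 L HL _ _ _ _ HS); [assumption | apply d_wandR; assumption | exact HE].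
  - rewrite <- fill_comp; apply d_wandL; [exact D1 | rewrite fill_comp; apply IH2; auto].
  - rewrite <- fill_comp; apply d_struct; [exact Hr|]; intros Ti HTi; rewrite fill_comp; apply IH; auto.
  - discriminate Hc.
Qed.

Theorem theorem7p5 (L : list srule) :
  (forall r, In r L -> simple_rule r) ->
  forall (C : bctx) (D' : bunch) (A B : formula),
    cf L D' A -> cf L (fill C (BForm A)) B -> cf L (fill C D') B.
Proof.
  intros HL C D' A B. revert C D' B.
  induction A; intros C D' B HD HE; eapply cut_main; eauto; simpl; auto.
Qed.
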